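(* Let $\mathcal G$ satisfy the Compactness, Convexity, Continuity and Symmetry assumptions. Then for every constant $M\ge0$, \[ \inf_{W\in\mathbb R^n}\sup_{g\in\mathcal G}J_\lambda(W,g)\le\sup_{g\in\mathcal G}\inf_{\|W\|\le M}B(W,g)^2+\frac{\lambda}{n^2}M^2 . \]
   Context: Setting: finite state space $\mathcal S$, actions $[m]$, confounder space $\mathcal U$; data $Z_i=(S_i,A_i,S_i')$, $i\in[n]$, with unobserved confounders $U_i$; $\pi_e(a\mid s,u)$ an evaluation policy; $d(S)$ the stationary state density ratio; conditional expectations are under the behavior stationary distribution. For $W\in\mathbb R^n$ and $g=(g_1,\dots,g_m)$, $g_a:\mathcal S\times\mathcal U\to\mathbb R$: $f_{ia}=W_i\delta_{A_ia}-d(S_i)\pi_e(a\mid S_i,U_i)$, $B(W,g)=\frac1n\sum_i\sum_a\mathbb E[f_{ia}g_a(S_i,U_i)\mid Z_i]$, $J_\lambda(W,g)=B(W,g)^2+\frac{\lambda}{n^2}\|W\|^2$ with $\lambda\ge0$. $\mathcal G$ is a normed class of such $g$, $\mathcal G^*=\{g/\|g\|:g\in\mathcal G,\|g\|>0\}$, $h_g(z)=\mathbb E[g_A(S,U)\mid Z=z]$, $k_g(z)=\mathbb E[d(S)\sum_a\pi_e(a\mid S,U)g_a(S,U)\mid Z=z]$. Compactness: $\mathcal G$ and $\mathcal G^*$ compact. Convexity: $\mathcal G$ convex. Continuity: $h_g(z)$ and $k_g(z)$ continuous in $g$ for every $z$, and $g_a(s,u)$ continuous in $(s,u)$. Symmetry: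 $g\in\mathcal G\iff-g\in\mathcal G$. *)

(* Defs.v *)
From HB Require Import structures.
From mathcomp Require Import all_boot all_order all_algebra.
From mathcomp Require Import all_classical all_reals all_analysis.
Set Implicit Arguments. Unset Strict Implicit. Unset Printing Implicit Defensive.
Import Order.TTheory GRing.Theory Num.Theory.
Import numFieldNormedType.Exports.
Local Open Scope classical_set_scope.
Local Open Scope ring_scope.

Definition Borel (U : ptopologicalType) := g_sigma_algebraType (@open U).

(* Observed transition Z = (S, A, S'). *)
Definition Ztype (St : finType) (m : nat) := (St * 'I_m * St)%type.

Section Defs.
Context (R : realType) (St : finType) (m n : nat) (U : ptopologicalType).

(* Conditional expectation given Z = z: integral against the conditional
   distribution (kernel) kappa z of the confounder U given Z = z. *)
Definition condE (kappa : Ztype St m -> probability (Borel U) R)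
  (z : Ztype St m) (f : U -> R) : R := Rintegral (kappa z) setT f.

Variables (kappa : Ztype St m -> probability (Borel U) R)
  (Z : 'I_n -> Ztype St m) (d : St -> R) (pie : 'I_m -> St -> U -> R).

Definition Sof (z : Ztype St m) : St := z.1.1.
Definition Aof (z : Ztype St m) : 'I_m := z.1.2.

Definition fia (W : 'I_n -> R) (i : 'I_n) (a : 'I_m) (u : U) : R :=
  W i * ((Aof (Z i) == a)%:R) - d (Sof (Z i)) * pie a (Sof (Z i)) u.

Definition Bfun (W : 'I_n -> R) (g : 'I_m -> St -> U -> R) : R :=
  n%:R^-1 * \sum_(i < n) \sum_(a < m)
     condE kappa (Z i) (fun u => fia W i a u * g a (Sof (Z i)) u).

Definition normW (W : 'I_n -> R) : R := Num.sqrt (\sum_(i < n) W i ^+ 2).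

Definition Jfun (lam : R) (W : 'I_n -> R) (g : 'I_m -> St -> U -> R) : R :=
  Bfun W g ^+ 2 + lam / (n%:R ^+ 2) * normW W ^+ 2.

Definition hfun (g : 'I_m -> St -> U -> R) (z : Ztype St m) : R :=
  condE kappa z (fun u => g (Aof z) (Sof z) u).

Definition kfun (g : 'I_m -> St -> U -> R) (z : Ztype St m) : R :=
  condE kappa z (fun u => d (Sof z) * \sum_(a < m) pie a (Sof z) u * g a (Sof z) u).
End Defs.

Definition Gstar (R : realType) (V : normedModType R) (G : set V) : set V :=
  [set (`|v|^-1) *: v | v in [set v | G v /\ 0 < `|v|]].

(* Main.v *)
Require Import Defs.
From HB Require Import structures.
From mathcomp Require Import all_boot all_order all_algebra.
From mathcomp Require Import all_classical all_reals all_analysis.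
From mathcomp Require Import ring lra.
Set Implicit Arguments. Unset Strict Implicit. Unset Printing Implicit Defensive.
Import Order.TTheory GRing.Theory Num.Theory.
Import numFieldNormedType.Exports.
Local Open Scope classical_set_scope.
Local Open Scope ring_scope.
Section Pure.
Variable R : realType.

Lemma CS n (a b : 'I_n -> R) :
  (\sum_i a i * b i) ^+ 2 <= (\sum_i a i ^+ 2) * (\sum_i b i ^+ 2).
Proof.
have H : 0 <= \sum_i \sum_j (a i * b j - a j * b i) ^+ 2.
  by apply: sumr_ge0 => i _; apply: sumr_ge0 => j _; exact: sqr_ge0.
have h1 : \sum_i \sum_j a i ^+ 2 * b j ^+ 2 = (\sum_i a i ^+ 2) * (\sum_i b i ^+ 2).
  by rewrite big_distrl; apply: eq_bigr => i _; rewrite big_distrr.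
have h2 : \sum_i \sum_j a j ^+ 2 * b i ^+ 2 = (\sum_i a i ^+ 2) * (\sum_i b i ^+ 2).
  by rewrite exchange_big /= h1.
have h3 : \sum_i \sum_j (a i * b i) * (a j * b j) = (\sum_i a i * b i) ^+ 2.
  by rewrite expr2 big_distrl; apply: eq_bigr => i _; rewrite big_distrr.
have E : \sum_i \sum_j (a i * b j - a j * b i) ^+ 2 =
   \sum_i \sum_j a i ^+ 2 * b j ^+ 2 + \sum_i \sum_j a j ^+ 2 * b i ^+ 2
   - 2 * \sum_i \sum_j (a i * b i) * (a j * b j).
  rewrite mulr_sumr -big_split -sumrB /=; apply: eq_bigr => i _.
  rewrite mulr_sumr -big_split -sumrB /=; apply: eq_bigr => j _.
  ring.
rewrite E h1 h2 h3 in H; rewrite -subr_ge0; lra.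
Qed.

Definition infS (T : Type) (A : set T) (f : T -> R) : R := inf [set f x | x in A].

Lemma infS_le (T : Type) (A : set T) (f : T -> R) b t :
  (forall t, A t -> b <= f t) -> A t -> infS A f <= f t.
Proof.
move=> hb At; apply: ge_inf; first by exists b => _ [u Au <-]; exact: hb.
by exists t.
Qed.

Lemma le_infS (T : Type) (A : set T) (f : T -> R) a t :
  A t -> (forall t, A t -> a <= f t) -> a <= infS A f.
Proof.
move=> At ha; apply: lb_le_inf; first by exists (f t), t.
by move=> _ [u Au <-]; exact: ha.
Qed.

Definition sublin n (s : ('I_n -> R) -> R) :=
  (forall x y, s (fun i => x i + y i) <= s x + s y) /\
  (forall c x, 0 < c -> s (fun i => c * x i) = c * s x).

Lemma sublin0 n (s : ('I_n -> R) -> R) : sublin s -> s (fun _ => 0) = 0.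
Proof.
case=> _ hom; have := hom 2 (fun _ => 0) (ltr0Sn _ 1).
rewrite (_ : (fun _ : 'I_n => 2 * 0) = (fun _ => 0)); last by apply: funext => i; rewrite mulr0.
move=> h; lra.
Qed.

Definition zr n (j : nat) (x : 'I_n -> R) := fun i : 'I_n => if (i < j)%N then x i else 0.

Lemma sum_delta n (jo : 'I_n) (F : 'I_n -> R) :
  \sum_i ((i == jo)%:R * F i) = F jo.
Proof.
rewrite (bigD1 jo) //= eqxx mul1r big1 ?addr0 // => i /negPf ->; by rewrite mul0r.
Qed.

Lemma HB_claim n j : (j <= n)%N -> forall s : ('I_n -> R) -> R, sublin s ->
  exists W : 'I_n -> R, (forall i : 'I_n, (j <= i)%N -> W i = 0) /\
    forall x, \sum_i W i * x i <= s (zr j x).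
Proof.
elim: j => [_ s hs|j IH jn s hs].
  exists (fun _ => 0); split => [//|x].
  rewrite big1; last by move=> i _; rewrite mul0r.
  rewrite (_ : zr 0 x = fun _ => 0); first by rewrite (sublin0 hs).
  by apply: funext.
set jo : 'I_n := Ordinal jn.
set e : 'I_n -> R := fun i => (i == jo)%:R.
have [sadd shom] := hs.
have s0 := sublin0 hs.
set a := s e.
have sce : forall c, a * c <= s (fun i => c * e i).
  move=> c; case: (ltgtP c 0) => hc.
  - have he : 0 <= a + s (fun i => -1 * e i).
      rewrite -s0 (_ : (fun _ => 0) = fun i => e i + (-1 * e i)); first exact: sadd.
      by apply: funext => i; rewrite mulN1r subrr.
    rewrite (_ : (fun i => c * e i) = fun i => (- c) * (-1 * e i)); last first.
      by apply: funext => i; rewrite mulN1r mulrNN.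
    rewrite shom ?oppr_gt0 //; nra.
  - by rewrite shom // mulrC.
  - rewrite hc mulr0 (_ : (fun i => 0 * e i) = fun _ => 0) ?s0 //.
    by apply: funext => i; rewrite mul0r.
have lbd : forall y c, - s (fun i => - y i) <= s (fun i => y i + c * e i) - a * c.
  move=> y c.
  have : s (fun i => c * e i) <= s (fun i => y i + c * e i) + s (fun i => - y i).
    rewrite {1}(_ : (fun i => c * e i) = fun i => (y i + c * e i) + (- y i)); first exact: sadd.
    by apply: funext => i; rewrite addrC addKr.
  have := sce c; lra.
set s2 := fun x => infS setT (fun c => s (fun i => zr j x i + c * e i) - a * c).
have s2le : forall x c, s2 x <= s (fun i => zr j x i + c * e i) - a * c.
  by move=> x c; apply: (infS_le (b := - s (fun i => - zr j x i))) => // t _; exact: lbd.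
have les2 : forall x b, (forall c, b <= s (fun i => zr j x i + c * e i) - a * c) -> b <= s2 x.
  by move=> x b hb; apply: (le_infS (t := 0)) => // t _; exact: hb.
have hs2 : sublin s2.
  split.
  - move=> x y.
    suff : forall c2, s2 (fun i => x i + y i) - (s (fun i => zr j y i + c2 * e i) - a * c2) <= s2 x.
      move=> h; have : s2 (fun i => x i + y i) - s2 x <= s2 y.
        by apply: les2 => c; have := h c; lra.
      lra.
    move=> c2; apply: les2 => c1.
    have := s2le (fun i => x i + y i) (c1 + c2).
    have := sadd (fun i => zr j x i + c1 * e i) (fun i => zr j y i + c2 * e i).
    rewrite (_ : (fun i => zr j x i + c1 * e i + (zr j y i + c2 * e i)) =
                 (fun i => zr j (fun i => x i + y i) i + (c1 + c2) * e i)); first by lra.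
    apply: funext => i; rewrite /zr; case: ifP => _; ring.
  - move=> mu x mu0; apply/eqP; rewrite eq_le; apply/andP; split.
    + rewrite -ler_pdivrMl //; apply: les2 => c.
      rewrite ler_pdivrMl //; apply: le_trans (s2le _ (mu * c)) _.
      rewrite (_ : (fun i => zr j (fun i => mu * x i) i + mu * c * e i) =
                   (fun i => mu * (zr j x i + c * e i))); last first.
        by apply: funext => i; rewrite /zr; case: ifP => _; ring.
      by rewrite shom //; lra.
    + apply: les2 => c.
      have := s2le x (c / mu).
      rewrite (_ : (fun i => zr j (fun i => mu * x i) i + c * e i) =
                   (fun i => mu * (zr j x i + c / mu * e i))); last first.
        apply: funext => i; rewrite /zr; case: ifP => _; field; lra.
      rewrite shom // => h.
      have -> : mu * s (fun i => zr j x i + c / mu * e i) - a * c =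
        mu * (s (fun i => zr j x i + c / mu * e i) - a * (c / mu)) by field; lra.
      by rewrite ler_pM2l.
have [W' [W'0 W'le]] := IH (ltnW jn) s2 hs2.
exists (fun i => W' i + e i * a); split.
  move=> i ji; rewrite W'0 ?(ltnW ji) // /e.
  case: eqP => [ij|]; last by rewrite mul0r addr0.
  by move: ji; rewrite ij /= ltnn.
move=> x.
rewrite (eq_bigr (fun i => W' i * x i + (i == jo)%:R * (a * x i))); last first.
  by move=> i _; rewrite /e; ring.
rewrite big_split /= sum_delta.
apply: le_trans (lerD (W'le x) (lexx _)) _.
have := s2le (zr j x) (x jo).
rewrite (_ : (fun i => zr j (zr j x) i + x jo * e i) = zr j.+1 x); first by lra.
apply: funext => i; rewrite /zr /e.
case: (ltngtP i j) => hij.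
- have -> : (i < j.+1)%N by apply: ltnW.
  have -> : (i == jo) = false by apply/eqP => hi; move: hij; rewrite hi /= ltnn.
  by rewrite mulr0 addr0.
- rewrite ltnS leqNgt hij /=.
  have -> : (i == jo) = false by apply/eqP => hi; move: hij; rewrite hi /= ltnn.
  by rewrite mulr0 addr0.
- have -> : i = jo by apply: val_inj.
  by rewrite eqxx mulr1 add0r /= ltnSn.
Qed.

Lemma HB n (s : ('I_n -> R) -> R) : sublin s ->
  exists W : 'I_n -> R, forall x, \sum_i W i * x i <= s x.
Proof.
move=> hs; have [W [_ HW]] := HB_claim (leqnn n) hs.
exists W => x; have := HW x.
by rewrite (_ : zr n x = x) //; apply: funext => i; rewrite /zr ltn_ord.
Qed.

Section Norms.
Variable n : nat.
Implicit Types x y : 'I_n -> R.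

Lemma nW_ge0 x : 0 <= normW x.
Proof. exact: sqrtr_ge0. Qed.

Lemma nW_sq x : normW x ^+ 2 = \sum_i x i ^+ 2.
Proof. by rewrite /normW sqr_sqrtr //; apply: sumr_ge0 => i _; exact: sqr_ge0. Qed.

Lemma nW_scale c x : normW (fun i => c * x i) = `|c| * normW x.
Proof.
rewrite /normW (eq_bigr (fun i => c ^+ 2 * x i ^+ 2)); last by move=> i _; rewrite exprMn.
by rewrite -mulr_sumr sqrtrM ?sqr_ge0 // sqrtr_sqr.
Qed.

Lemma nW_opp x : normW (fun i => - x i) = normW x.
Proof.
rewrite (_ : (fun i => - x i) = fun i => -1 * x i); last by apply: funext => i; rewrite mulN1r.
by rewrite nW_scale normrN1 mul1r.
Qed.

Lemma dot_le x y : \sum_i x i * y i <= normW x * normW y.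
Proof.
have h := CS x y; rewrite -!nW_sq -exprMn in h.
have hP : 0 <= normW x * normW y by apply: mulr_ge0; exact: nW_ge0.
apply: le_trans (ler_norm _) _.
by rewrite -ler_sqr ?nnegrE ?normr_ge0 // real_normK ?num_real.
Qed.

Lemma nW_tri x y : normW (fun i => x i + y i) <= normW x + normW y.
Proof.
have h : normW (fun i => x i + y i) ^+ 2 <= (normW x + normW y) ^+ 2.
  rewrite nW_sq sqrrD !nW_sq.
  rewrite (eq_bigr (fun i => x i ^+ 2 + y i ^+ 2 + (x i * y i) *+ 2)); last by move=> i _; rewrite sqrrD addrAC.
  rewrite !big_split /= mulr2n.
  have := dot_le x y; lra.
have := nW_ge0 x; have := nW_ge0 y; have := nW_ge0 (fun i => x i + y i); nra.
Qed.

Lemma nW0 : normW (fun _ : 'I_n => (0:R)) = 0.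
Proof. by rewrite /normW big1 ?sqrtr0 // => i _; rewrite expr0n. Qed.

End Norms.

Lemma core n (T : Type) (G : set T) (xf : T -> 'I_n -> R) (kf : T -> R) (t M : R) :
  0 <= M ->
  (forall v w p, G v -> G w -> 0 <= p -> p <= 1 -> exists u, G u /\
     (forall i, xf u i = p * xf v i + (1 - p) * xf w i) /\ kf u = p * kf v + (1 - p) * kf w) ->
  (forall v, G v -> exists u, G u /\ (forall i, xf u i = - xf v i) /\ kf u = - kf v) ->
  (forall v, G v -> exists W : 'I_n -> R, normW W <= M /\ `|\sum_i W i * xf v i - kf v| <= t) ->
  exists W : 'I_n -> R, normW W <= M /\
     forall v, G v -> `|\sum_i W i * xf v i - kf v| <= t.
Proof.
move=> M0 Gconv Gsym hyp.
have [[v0 Gv0]|G0] := pselect (exists v, G v); last first.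
  exists (fun _ => 0); split; first by rewrite nW0.
  by move=> v Gv; exfalso; apply: G0; exists v.
have hk : forall v, G v -> - (M * normW (xf v)) <= kf v + t.
  move=> v Gv; have [W [hW hF]] := hyp v Gv.
  have h1 := dot_le (fun i => - W i) (xf v).
  rewrite nW_opp (eq_bigr (fun i => - (W i * xf v i))) in h1; last by move=> i _; rewrite mulNr.
  rewrite sumrN in h1.
  have h2 : normW W * normW (xf v) <= M * normW (xf v) by apply: ler_wpM2r => //; exact: nW_ge0.
  move: hF; rewrite ler_norml => /andP [hF1 hF2]; lra.
pose term (x : 'I_n -> R) (p : R * T) :=
  p.1 * (kf p.2 + t) + M * normW (fun i => x i - p.1 * xf p.2 i).
pose A := [set p : R * T | 0 <= p.1 /\ G p.2].
pose s x := infS A (term x).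
have lbt : forall x p, A p -> - (M * normW x) <= term x p.
  move=> x [l v] [/= l0 Gv]; rewrite /term /=.
  have h1 : l * (- (M * normW (xf v))) <= l * (kf v + t) by apply: ler_wpM2l => //; exact: hk.
  have h2 := nW_tri (fun i => x i - l * xf v i) (fun i => - x i).
  rewrite nW_opp (_ : (fun i => x i - l * xf v i + - x i) = fun i => (- l) * xf v i) in h2; last first.
    by apply: funext => i; ring.
  rewrite nW_scale normrN ger0_norm // in h2.
  have h3 : M * (l * normW (xf v)) <= M * (normW (fun i => x i - l * xf v i) + normW x).
    exact: ler_wpM2l.
  lra.
have sle : forall x p, A p -> s x <= term x p.
  by move=> x p Ap; apply: (infS_le (b := - (M * normW x))) => // q Aq; exact: lbt.
have les : forall x b, (forall p, A p -> b <= term x p) -> b <= s x.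
  by move=> x b hb; apply: (le_infS (t := (0, v0))) => //; split => //=.
have termS : forall x mu l v, 0 < mu ->
    term (fun i => mu * x i) (mu * l, v) = mu * term x (l, v).
  move=> x mu l v mu0; rewrite /term /=.
  rewrite (_ : (fun i => mu * x i - mu * l * xf v i) = fun i => mu * (x i - l * xf v i)); last first.
    by apply: funext => i; ring.
  rewrite nW_scale ger0_norm ?(ltW mu0) //; ring.
have hs : sublin s.
  split.
  - move=> x y.
    suff H : forall p1 p2, A p1 -> A p2 -> s (fun i => x i + y i) <= term x p1 + term y p2.
      have : s (fun i => x i + y i) - s x <= s y.
        apply: (les) => p2 Ap2.
        have : s (fun i => x i + y i) - term y p2 <= s x.
          by apply: (les) => p1 Ap1; have := H p1 p2 Ap1 Ap2; lra.
        lra.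
      lra.
    move=> [l1 v1] [l2 v2] [/= l10 Gv1] [/= l20 Gv2].
    have [u [Gu [hxu hku]]] : exists u, G u /\
        (forall i, (l1 + l2) * xf u i = l1 * xf v1 i + l2 * xf v2 i) /\
        (l1 + l2) * kf u = l1 * kf v1 + l2 * kf v2.
      have [l0|lpos] := eqVneq (l1 + l2) 0.
        have e1 : l1 = 0 by lra.
        have e2 : l2 = 0 by lra.
        exists v1; rewrite l0 e1 e2; split => //; split => [i|]; ring.
      have lp : 0 < l1 + l2 by rewrite lt_neqAle eq_sym lpos /=; lra.
      have p1 : l1 / (l1 + l2) <= 1 by rewrite ler_pdivrMr // mul1r; lra.
      have [u [Gu [hx hk']]] := Gconv v1 v2 (l1 / (l1 + l2)) Gv1 Gv2
          (divr_ge0 l10 (ltW lp)) p1.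
      exists u; split => //; split => [i|]; [rewrite hx | rewrite hk']; field; lra.
    apply: le_trans (sle _ (l1 + l2, u) _) _; first by split => //=; lra.
    rewrite /term /=.
    rewrite (_ : (fun i => x i + y i - (l1 + l2) * xf u i) =
       fun i => (x i - l1 * xf v1 i) + (y i - l2 * xf v2 i)); last first.
      by apply: funext => i; rewrite hxu; ring.
    have h := nW_tri (fun i => x i - l1 * xf v1 i) (fun i => y i - l2 * xf v2 i).
    have h' := ler_wpM2l M0 h.
    have e : (l1 + l2) * (kf u + t) = l1 * (kf v1 + t) + l2 * (kf v2 + t).
      by rewrite mulrDr hku; ring.
    rewrite e; lra.
  - move=> mu x mu0; apply/eqP; rewrite eq_le; apply/andP; split.
    + rewrite -ler_pdivrMl //; apply: (les) => -[l v] [/= l0 Gv].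
      rewrite ler_pdivrMl // -termS //; apply: (sle); split => //=.
      exact: mulr_ge0 (ltW mu0) l0.
    + apply: (les) => -[l v] [/= l0 Gv].
      have E := termS x mu (l / mu) v mu0.
      rewrite (_ : mu * (l / mu) = l) in E; last by field; lra.
      rewrite E ler_pM2l //; apply: (sle); split => //=.
      exact: divr_ge0 l0 (ltW mu0).
have [W HW] := HB hs.
exists W; split.
  have := HW W.
  have := sle W (0, v0) (conj (lexx 0) Gv0).
  rewrite /term /= mul0r add0r.
  rewrite (_ : (fun i => W i - 0 * xf v0 i) = W); last by apply: funext => i; rewrite mul0r subr0.
  rewrite (eq_bigr (fun i => W i ^+ 2)); last by move=> i _; rewrite expr2.
  rewrite -nW_sq => h1 h2.
  have := nW_ge0 W; nra.
have key : forall v, G v -> \sum_i W i * xf v i - kf v <= t.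
  move=> v Gv; have := HW (xf v).
  have := sle (xf v) (1, v) (conj ler01 Gv).
  rewrite /term /= mul1r.
  rewrite (_ : (fun i => xf v i - 1 * xf v i) = fun _ => 0); last by apply: funext => i; rewrite mul1r subrr.
  rewrite nW0 mulr0 addr0; lra.
move=> v Gv; rewrite ler_norml; apply/andP; split; last exact: key.
have [u [Gu [hx hk']]] := Gsym v Gv.
have := key u Gu.
rewrite hk' (eq_bigr (fun i => - (W i * xf v i))); last by move=> i _; rewrite hx mulrN.
rewrite sumrN; lra.
Qed.
End Pure.
Lemma not_le_sub1 (R : realType) (x : R) : x <= x - 1 -> False.
Proof. lra. Qed.

Section Integ.
Variables (R : realType) (U : ptopologicalType) (mu : probability (Borel U) R).
Definition Int (f : U -> R) := mu.-integrable [set: Borel U] (EFin \o f).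

Lemma IntZ c f : Int f -> Int (fun u => c * f u).
Proof.
move=> h; rewrite /Int (_ : EFin \o _ = fun x => (c%:E * (EFin \o f) x)%E).
  exact: integrableZl.
by apply: funext => x; rewrite /= EFinM.
Qed.

Lemma IntD f g : Int f -> Int g -> Int (fun u => f u + g u).
Proof.
move=> hf hg; rewrite /Int (_ : EFin \o _ = ((EFin \o f) \+ (EFin \o g))%E).
  exact: integrableD.
by apply: funext => x; rewrite /= EFinD.
Qed.

Lemma IntM (h f : U -> R) : measurable_fun [set: Borel U] h ->
  (forall u, 0 <= h u <= 1) -> Int f -> Int (fun u => h u * f u).
Proof.
move=> mh hb hf; rewrite /Int (_ : EFin \o _ = ((EFin \o h) \* (EFin \o f))%E).
  apply: integrableMr => //; exists 1; split; first exact: num_real.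
  move=> x x1 u _ /=; rewrite ger0_norm; last by case/andP: (hb u).
  by case/andP: (hb u) => _ h1; apply: le_trans h1 (ltW x1).
by apply: funext => x; rewrite /= EFinM.
Qed.

Lemma RlinE c1 c2 f1 f2 : Int f1 -> Int f2 ->
  Rintegral mu setT (fun u => c1 * f1 u + c2 * f2 u) =
  c1 * Rintegral mu setT f1 + c2 * Rintegral mu setT f2.
Proof.
move=> h1 h2; rewrite RintegralD //; try exact: IntZ.
by rewrite !RintegralZl.
Qed.
End Integ.
Unset Implicit Arguments.

Theorem lemma4 (R : realType) (St : finType) (m n : nat) (U : ptopologicalType)
  (kappa : Ztype St m -> probability (Borel U) R)
  (Z : 'I_n -> Ztype St m) (d : St -> R) (pie : 'I_m -> St -> U -> R)
  (V : normedModType R) (ev : V -> 'I_m -> St -> U -> R) (G : set V)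
  (lam M : R)
  (* the normed class G consists of functions g = (g_1,...,g_m), with the
     vector operations of V being the pointwise ones *)
  (ev_inj : injective ev)
  (ev_lin : forall (c : R) (v w : V) a s u,
              ev (c *: v + w) a s u = c * ev v a s u + ev w a s u)
  (* standing assumptions: d a density ratio, pie a policy *)
  (d_ge0 : forall s, 0 <= d s)
  (pie_ge0 : forall a s u, 0 <= pie a s u)
  (pie_sum1 : forall s u, \sum_(a < m) pie a s u = 1)
  (pie_meas : forall a s, measurable_fun [set: Borel U] (pie a s))
  (* conditional expectations of g are well defined *)
  (G_int : forall v, G v -> forall a s z,
              (kappa z).-integrable [set: Borel U] (fun u => (ev v a s u)%:E))
  (* Compactness *)
  (compactG : compact G) (compactGstar : compact (Gstar G))
  (* Convexity *)
  (convexG : convex_set (G : set (convex_lmodType V)))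
  (* Continuity *)
  (cont_h : forall z, {within G, continuous (fun v => hfun kappa (ev v) z)})
  (cont_k : forall z, {within G, continuous (fun v => kfun kappa d pie (ev v) z)})
  (cont_g : forall v, G v -> forall a s, continuous (ev v a s))
  (* Symmetry *)
  (symG : forall v, G v <-> G (- v))
  (lam_ge0 : 0 <= lam) (M_ge0 : 0 <= M) :
  (ereal_inf [set ereal_sup [set (Jfun kappa Z d pie lam W (ev v))%:E | v in G]
             | W in [set: 'I_n -> R]]
   <= ereal_sup [set ereal_inf [set ((Bfun kappa Z d pie W (ev v)) ^+ 2)%R%:E
                                | W in [set W : 'I_n -> R | (normW W <= M)%R]]
                | v in G]
      + (lam / (n%:R ^+ 2) * M ^+ 2)%R%:E)%E.
Proof.
have ev0 : forall a s u, ev 0 a s u = 0.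
  move=> a s u; have := ev_lin 1 0 0 a s u.
  rewrite scale1r addr0 mul1r => h; lra.
have evZ : forall c v a s u, ev (c *: v) a s u = c * ev v a s u.
  by move=> c v a s u; rewrite -[c *: v]addr0 ev_lin ev0 addr0.
have evC : forall c1 c2 v w a s u,
    ev (c1 *: v + c2 *: w) a s u = c1 * ev v a s u + c2 * ev w a s u.
  by move=> c1 c2 v w a s u; rewrite ev_lin evZ.
have gint : forall v, G v -> forall a s z, Int (kappa z) (ev v a s).
  by move=> v Gv a s z; exact: G_int.
have pieb : forall a s u, 0 <= pie a s u <= 1.
  move=> a s u; rewrite pie_ge0 /= -(pie_sum1 s u) (bigD1 a) //= lerDl.
  by apply: sumr_ge0 => b _; exact: pie_ge0.
have pgint : forall v, G v -> forall a s z,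
    Int (kappa z) (fun u => pie a s u * ev v a s u).
  by move=> v Gv a s z; apply: IntM => //; exact: gint.
pose cg v i := condE kappa (Z i) (ev v (Aof (Z i)) (Sof (Z i))).
pose cpg v i a := condE kappa (Z i) (fun u => pie a (Sof (Z i)) u * ev v a (Sof (Z i)) u).
pose xf v i := n%:R^-1 * cg v i.
pose kf v := n%:R^-1 * \sum_i \sum_a d (Sof (Z i)) * cpg v i a.
have Bdec : forall W v, G v ->
    Bfun kappa Z d pie W (ev v) = \sum_i W i * xf v i - kf v.
  move=> W v Gv; rewrite /Bfun /fia.
  have E : forall i a, condE kappa (Z i)
      (fun u => (W i * (Aof (Z i) == a)%:R - d (Sof (Z i)) * pie a (Sof (Z i)) u) *
                ev v a (Sof (Z i)) u) =
      (a == Aof (Z i))%:R * (W i * condE kappa (Z i) (ev v a (Sof (Z i))))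
      + (- d (Sof (Z i))) * cpg v i a.
    move=> i a; rewrite /cpg /condE.
    have -> : (a == Aof (Z i))%:R * (W i * Rintegral (kappa (Z i)) setT (ev v a (Sof (Z i))))
       = ((a == Aof (Z i))%:R * W i) * Rintegral (kappa (Z i)) setT (ev v a (Sof (Z i))) by ring.
    rewrite -RlinE; [|exact: gint|exact: pgint].
    congr (Rintegral _ _ _); apply: funext => u; rewrite eq_sym; ring.
  under eq_bigr => i _ do under eq_bigr => a _ do rewrite E.
  under eq_bigr => i _ do rewrite big_split /= sum_delta.
  rewrite big_split /= mulrDr /kf /xf /cg mulr_sumr; congr (_ + _).
    by apply: eq_bigr => i _; ring.
  rewrite mulr_sumr -mulrN -sumrN mulr_sumr; apply: eq_bigr => i _.
  rewrite -sumrN mulr_sumr mulr_sumr; apply: eq_bigr => a _; ring.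
have xf_lin : forall c1 c2 v w, G v -> G w -> forall i,
    xf (c1 *: v + c2 *: w) i = c1 * xf v i + c2 * xf w i.
  move=> c1 c2 v w Gv Gw i; rewrite /xf /cg /condE.
  rewrite (_ : ev (c1 *: v + c2 *: w) (Aof (Z i)) (Sof (Z i)) =
    fun u => c1 * ev v (Aof (Z i)) (Sof (Z i)) u + c2 * ev w (Aof (Z i)) (Sof (Z i)) u); last first.
    by apply: funext => u; rewrite evC.
  rewrite RlinE; [ring|exact: gint|exact: gint].
have kf_lin : forall c1 c2 v w, G v -> G w ->
    kf (c1 *: v + c2 *: w) = c1 * kf v + c2 * kf w.
  move=> c1 c2 v w Gv Gw; rewrite /kf.
  have E : forall i a, cpg (c1 *: v + c2 *: w) i a = c1 * cpg v i a + c2 * cpg w i a.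
    move=> i a; rewrite /cpg /condE -RlinE; [|exact: pgint|exact: pgint].
    by congr (Rintegral _ _ _); apply: funext => u; rewrite evC; ring.
  rewrite !mulr_sumr -big_split /=; apply: eq_bigr => i _.
  rewrite !mulr_sumr -big_split /=; apply: eq_bigr => a _.
  rewrite E; ring.
have Gconv : forall v w p, G v -> G w -> 0 <= p -> p <= 1 -> exists u, G u /\
     (forall i, xf u i = p * xf v i + (1 - p) * xf w i) /\ kf u = p * kf v + (1 - p) * kf w.
  move=> v w p Gv Gw p0 p1; exists (p *: v + (1 - p) *: w); split; last first.
    by split; [exact: xf_lin | exact: kf_lin].
  have := convexG v w (Itv01 p0 p1) (mem_set Gv) (mem_set Gw).
  by rewrite inE.
have Gsym : forall v, G v -> exists u, G u /\ (forall i, xf u i = - xf v i) /\ kf u = - kf v.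
  move=> v Gv; exists ((-1) *: v + 0 *: v); split.
    by rewrite scale0r addr0 scaleN1r; exact: (proj1 (symG v)).
  split; [move=> i; rewrite xf_lin // | rewrite kf_lin //]; ring.
have main : forall r : R,
    (ereal_sup [set ereal_inf [set ((Bfun kappa Z d pie W (ev v)) ^+ 2)%R%:E
                                | W in [set W : 'I_n -> R | (normW W <= M)%R]]
                | v in G] < r%:E)%E ->
    (ereal_inf [set ereal_sup [set (Jfun kappa Z d pie lam W (ev v))%:E | v in G]
             | W in [set: 'I_n -> R]] <= (r + lam / (n%:R ^+ 2) * M ^+ 2)%:E)%E.
  move=> r Sr.
  have hyp : forall v, G v -> 0 <= r /\ exists W : 'I_n -> R, normW W <= M /\
      `|\sum_i W i * xf v i - kf v| <= Num.sqrt r.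
    move=> v Gv.
    have := le_lt_trans (ereal_sup_ubound _) Sr.
    move=> /(_ (ereal_inf [set ((Bfun kappa Z d pie W (ev v)) ^+ 2)%R%:E
                                | W in [set W : 'I_n -> R | (normW W <= M)%R]])).
    case/(_ _)/Wrap; first by exists v.
    case/ereal_inf_lt => _ [W WB <-]; rewrite lte_fin => hlt.
    have r0 : 0 <= r by apply: le_trans (ltW hlt); exact: sqr_ge0.
    split => //; exists W; split => //.
    by rewrite -Bdec // -sqrtr_sqr ler_sqrt // ltW.
  have [W [hW hF]] : exists W : 'I_n -> R, normW W <= M /\
      forall v, G v -> `|\sum_i W i * xf v i - kf v| <= Num.sqrt r.
    apply: core => // v Gv; exact: (hyp v Gv).2.
  apply: ge_ereal_inf; exists (ereal_sup [set (Jfun kappa Z d pie lam W (ev v))%:E | v in G]).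
    by exists W.
  apply: ge_ereal_sup => _ [v Gv <-]; rewrite lee_fin /Jfun Bdec //.
  have r0 := (hyp v Gv).1.
  set F := \sum_i W i * xf v i - kf v.
  have h1 := hF v Gv.
  have h2 : F ^+ 2 <= r.
    rewrite -real_normK ?num_real // -(sqr_sqrtr r0).
    by rewrite ler_sqr ?nnegrE ?normr_ge0 ?sqrtr_ge0.
  have h3 : normW W ^+ 2 <= M ^+ 2.
    by rewrite ler_sqr ?nnegrE ?nW_ge0.
  have hc : 0 <= lam / (n%:R ^+ 2) by apply: divr_ge0 => //; exact: exprn_ge0.
  have := ler_wpM2l hc h3; lra.
set S := ereal_sup _ in main *.
set L := ereal_inf _ in main *.
set pen := lam / (n%:R ^+ 2) * M ^+ 2 in main *.
clearbody S L.
case: S main => [r0| |] main.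
- apply/lee_addgt0Pr => e e0.
  have := main (r0 + e); rewrite lte_fin ltrDl => /(_ e0).
  by rewrite -!EFinD (_ : r0 + pen + e = r0 + e + pen) //; ring.
- by rewrite leey.
- case: L main => [l| |] main.
  + have h := main (l - 1 - pen)%R (ltNyr _); move: h; rewrite lee_fin subrK => h; exfalso; exact: (not_le_sub1 h).
  + by have := main 0 (ltNyr _).
  + by [].
Qed.
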